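(* Let $n,r$ be integers with $n\ge r+2\ge 2$. For every $g\in K$ there exists a unique element $w_g\in F(X)$ representing $g$ that decomposes as $w_g=w_g^\Delta\cdot w_g^{(1)}\cdot w_g^{(2)}\cdots w_g^{(n-1)}$ with $w_g^{(i)}\in F(X^{(i)})$ for $i\in\{1,\dots,n-1\}$ and $w_g^\Delta\in[F(\Delta),F(\Delta)]$. Moreover, for $1\le i\le n-1$, the element $w_g^{(i)}(a^{(i)}_1,\dots,a^{(i)}_r)\in F^{(i)}$, obtained by substituting $a^{(i)}_j$ for $x^{(i)}_j$, equals the projection of $g$ to the factor $F^{(i)}$.
   Context: For $\alpha\in\{1,\dots,n\}$ let $F^{(\alpha)}$ be the free group on $a^{(\alpha)}_1,\dots,a^{(\alpha)}_r$, let $\psi\colon F^{(1)}\times\cdots\times F^{(n)}\to\mathbb Z^r$ send each $a^{(\alpha)}_j$ to the standard basis vector $e_j$, and $K=\ker\psi$. For $\alpha\in\{1,\dots,n-1\}$, $j\in\{1,\dots,r\}$ set $x^{(\alpha)}_j=a^{(\alpha)}_j(a^{(n)}_j)^{-1}\in K$; $X^{(\alpha)}=(x^{(\alpha)}_1,\dots,x^{(\alpha)}_r)$, $X$ the set of all $x^{(\alpha)}_j$, $\Delta=(x^{(1)}_1,x^{(2)}_2,\dots,x^{(r)}_r)$. $F(X)$, $F(X^{(\alpha)})$, $F(\Delta)$ are the abstract free groups on these letters, with $F(X^{(\alpha)}),F(\Delta)\le F(X)$, and ''represents'' refers to the natural map $F(X)\to K$. $[\cdot,\cdot]$ denotes the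 commutator subgroup. *)

(* Defs.v *)
From mathcomp Require Import all_boot all_order all_algebra.
Set Implicit Arguments. Unset Strict Implicit. Unset Printing Implicit Defensive.
Import GRing.Theory.

Section FreeGroup.
Variable A : eqType.

(* a letter (a, b): the generator a if b = false, its inverse if b = true *)
Definition letter := (A * bool)%type.
Definition inv_letter (l : letter) : letter := (l.1, ~~ l.2).

Fixpoint reduced (s : seq letter) : bool :=
  match s with
  | x :: ((y :: _) as t) => (y != inv_letter x) && reduced t
  | _ => true
  end.

Definition push (x : letter) (s : seq letter) : seq letter :=
  match s with
  | y :: t => if y == inv_letter x then t else x :: s
  | [::] => [:: x]
  end.

Definition reduce (s : seq letter) : seq letter := foldr push [::] s.

Lemma reduced_push x s : reduced s -> reduced (push x s).
Proof.
case: s => [|y t] //= Hs.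
case: eqP => [_|/eqP ne]; first by case: t Hs => // z u /andP [].
by rewrite /= ne Hs.
Qed.

Lemma reduced_reduce s : reduced (reduce s).
Proof. by elim: s => //= x s IH; apply: reduced_push. Qed.

Record fg := FG { fgword : seq letter; fgP : reduced fgword }.

Definition fg_one : fg := @FG [::] isT.
Definition fg_mul (u v : fg) : fg :=
  @FG (reduce (fgword u ++ fgword v)) (reduced_reduce _).
Definition fg_inv (u : fg) : fg :=
  @FG (reduce (rev (map inv_letter (fgword u)))) (reduced_reduce _).
Definition fg_gen (a : A) : fg := @FG [:: (a, false)] isT.
Definition fg_comm (u v : fg) : fg :=
  fg_mul (fg_mul (fg_inv u) (fg_inv v)) (fg_mul u v).

Definition inF (S : pred A) (w : fg) : bool :=
  all (fun l : letter => S l.1) (fgword w).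

Inductive in_comm (S : pred A) : fg -> Prop :=
  | in_comm_gen u v : inF S u -> inF S v -> in_comm S (fg_comm u v)
  | in_comm_one : in_comm S fg_one
  | in_comm_mul u v : in_comm S u -> in_comm S v -> in_comm S (fg_mul u v)
  | in_comm_inv u : in_comm S u -> in_comm S (fg_inv u).

Definition expsum (a : A) (w : fg) : int :=
  \sum_(l <- fgword w | l.1 == a) (if l.2 then (-1)%R else 1%R).

End FreeGroup.

Definition fg_subst (A B : eqType) (f : A -> fg B) (w : fg A) : fg B :=
  foldr (fun (l : letter A) acc =>
           fg_mul (if l.2 then fg_inv (f l.1) else f l.1) acc)
        (fg_one B) (fgword w).

(* Indices: paper's alpha in {1..n} is 'I_n (alpha-1); F^(n) is index n.-1.
   X = {x^(beta)_j}, beta in 'I_n.-1, j in 'I_r. *)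
Definition Xlet (n r : nat) := ('I_n.-1 * 'I_r)%type.

(* g = (g_alpha)_alpha in F^(1) x ... x F^(n) lies in K = ker psi *)
Definition inK (n r : nat) (g : 'I_n -> fg 'I_r) : Prop :=
  forall j : 'I_r, (\sum_(alpha < n) expsum j (g alpha))%R = 0%R.

(* the natural map F(X) -> K, x^(b)_j |-> a^(b)_j (a^(n)_j)^-1, component alpha *)
Definition phi (n r : nat) (w : fg (Xlet n r)) (alpha : 'I_n) : fg 'I_r :=
  fg_subst (fun x : Xlet n r =>
              if val alpha == n.-1 then fg_inv (fg_gen x.2)
              else if val x.1 == val alpha then fg_gen x.2 else fg_one _) w.

Definition represents (n r : nat) (w : fg (Xlet n r)) (g : 'I_n -> fg 'I_r) :=
  forall alpha, phi w alpha = g alpha.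

Definition inDelta (n r : nat) (x : Xlet n r) : bool := val x.1 == val x.2.
Definition inXalpha (n r : nat) (i : 'I_n.-1) (x : Xlet n r) : bool := x.1 == i.

Definition decomp (n r : nat) (w wD : fg (Xlet n r)) (ws : 'I_n.-1 -> fg (Xlet n r)) :=
  [/\ in_comm (@inDelta n r) wD,
      forall i, inF (@inXalpha n r i) (ws i)
    & w = foldl (fun acc i => fg_mul acc (ws i)) wD (enum 'I_n.-1)].

Definition eval_alpha (n r : nat) (w : fg (Xlet n r)) : fg 'I_r :=
  fg_subst (fun x : Xlet n r => fg_gen x.2) w.

(* Main.v *)
Require Import Defs.
From mathcomp Require Import all_boot all_order all_algebra zify.
Set Implicit Arguments. Unset Strict Implicit. Unset Printing Implicit Defensive.
Import GRing.Theory Num.Theory.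
Section FG.
Variable A : eqType.
Implicit Types (x y : letter A) (s t l : seq (letter A)) (u v w : fg A).
Lemma fg_eq u v : fgword u = fgword v -> u = v.
Proof. by case: u v => [w p] [w' p'] /= E; subst w'; rewrite (bool_irrelevance p p'). Qed.

Lemma inv_letterK x : inv_letter (inv_letter x) = x.
Proof. by case: x => a b; rewrite /inv_letter /= negbK. Qed.

Lemma push_inv x t : reduced t -> push x (push (inv_letter x) t) = t.
Proof.
case: t => [|y t] /=; first by rewrite eqxx.
rewrite inv_letterK; case: eqP => [->|ne] Ht /=.
  case: t Ht => [|z t] /=; first by [].
  by case/andP=> /negbTE -> _.
by rewrite eqxx.
Qed.

Lemma reduce_cons x s : reduce (x :: s) = push x (reduce s).
Proof. by []. Qed.

Lemma reduce_id s : reduced s -> reduce s = s.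
Proof.
elim: s => // x s IH Hs; rewrite reduce_cons IH; last by case: s Hs {IH} => // y s /andP[].
by case: s Hs {IH} => // y s /andP[ne _] /=; rewrite (negbTE ne).
Qed.

Lemma reduce_catr s t : reduce (s ++ t) = reduce (s ++ reduce t).
Proof. by rewrite /reduce !foldr_cat -/(reduce t) -/(reduce (reduce t)) (reduce_id (reduced_reduce t)). Qed.

Lemma reduce_catl_red s t : reduced t -> reduce (reduce s ++ t) = reduce (s ++ t).
Proof.
move=> Ht; elim: s => /=; first by [].
move=> x s IH; rewrite -IH.
have := reduced_reduce s; case: (reduce s) => [|y s'] //= Hs.
case: eqP => [->|_] //=.
rewrite push_inv //.
by have := reduced_reduce (s' ++ t).
Qed.

Lemma reduce_catl s t : reduce (s ++ t) = reduce (reduce s ++ t).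
Proof.
by rewrite reduce_catr -reduce_catl_red ?reduced_reduce // -reduce_catr.
Qed.

Lemma reduce_cancel s t x : reduce (s ++ x :: inv_letter x :: t) = reduce (s ++ t).
Proof.
rewrite reduce_catr [in RHS]reduce_catr !reduce_cons.
by rewrite push_inv // reduced_reduce.
Qed.

Definition elem s : fg A := FG (reduced_reduce s).

Lemma elemK u : elem (fgword u) = u.
Proof. by apply: fg_eq; rewrite /= reduce_id // fgP. Qed.

Lemma elem_cat s t : fg_mul (elem s) (elem t) = elem (s ++ t).
Proof. by apply: fg_eq; rewrite /= -reduce_catl -reduce_catr. Qed.

Lemma elem_reduce s : elem (reduce s) = elem s.
Proof. by apply: fg_eq; rewrite /= reduce_id // reduced_reduce. Qed.

Lemma fg_mulA u v w : fg_mul u (fg_mul v w) = fg_mul (fg_mul u v) w.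
Proof. by rewrite -(elemK u) -(elemK v) -(elemK w) !elem_cat catA. Qed.

Lemma one_elem : fg_one A = elem [::].
Proof. exact: fg_eq. Qed.

Lemma fg_mul1g u : fg_mul (fg_one A) u = u.
Proof. by rewrite -(elemK u) one_elem elem_cat. Qed.

Lemma fg_mulg1 u : fg_mul u (fg_one A) = u.
Proof. by rewrite -(elemK u) one_elem elem_cat cats0. Qed.

Lemma inv_elem u : fg_inv u = elem (rev (map (@inv_letter A) (fgword u))).
Proof. by []. Qed.

Lemma fg_mulVg u : fg_mul (fg_inv u) u = fg_one A.
Proof.
rewrite inv_elem -{2}(elemK u) elem_cat; apply: fg_eq => /=.
elim: (fgword u) => [|x s IH] //.
rewrite map_cons rev_cons -cats1 -catA cat1s.
by have := reduce_cancel (rev (map (@inv_letter A) s)) s (inv_letter x); rewrite inv_letterK => ->.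
Qed.

Lemma fg_mulgV u : fg_mul u (fg_inv u) = fg_one A.
Proof.
rewrite inv_elem -{1}(elemK u) elem_cat; apply: fg_eq => /=.
elim: (fgword u) => [|x s IH] //.
rewrite map_cons rev_cons.
set R := rev _.
have -> : (x :: s) ++ rcons R (inv_letter x) = [:: x] ++ ((s ++ R) ++ [:: inv_letter x]).
  by rewrite -cats1 catA.
by rewrite reduce_catr [reduce ((s ++ R) ++ _)]reduce_catl IH /= /inv_letter /= eqxx.
Qed.

Lemma inv_uniq_r u v : fg_mul u v = fg_one A -> v = fg_inv u.
Proof. by move=> E; rewrite -(fg_mul1g v) -(fg_mulVg u) -fg_mulA E fg_mulg1. Qed.

Lemma inv_uniq_l u v : fg_mul u v = fg_one A -> u = fg_inv v.
Proof. by move=> E; rewrite -(fg_mulg1 u) -(fg_mulgV v) fg_mulA E fg_mul1g. Qed.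

Lemma fg_invK u : fg_inv (fg_inv u) = u.
Proof. by apply/esym/inv_uniq_r; rewrite fg_mulVg. Qed.

Lemma fg_invM u v : fg_inv (fg_mul u v) = fg_mul (fg_inv v) (fg_inv u).
Proof.
apply/esym/inv_uniq_r.
by rewrite -fg_mulA (fg_mulA v) fg_mulgV fg_mul1g fg_mulgV.
Qed.

Lemma fg_inv1 : fg_inv (fg_one A) = fg_one A.
Proof. by apply/esym/inv_uniq_r; rewrite fg_mul1g. Qed.

Lemma fg_mulgI u v w : fg_mul u w = fg_mul v w -> u = v.
Proof.
by move=> E; rewrite -(fg_mulg1 u) -(fg_mulg1 v) -(fg_mulgV w) !fg_mulA E.
Qed.

Lemma all_push (P : pred (letter A)) x s : P x -> all P s -> all P (push x s).
Proof.
case: s => [|y t] /=; first by move=> ->.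
by move=> Px /andP[Py Pt]; case: eqP => _ //=; rewrite Px Py.
Qed.

Lemma all_reduce (P : pred (letter A)) s : all P s -> all P (reduce s).
Proof. by elim: s => //= x s IH /andP[Px Ps]; apply: all_push => //; apply: IH. Qed.

Lemma inF_elem (S : pred A) s : all (fun l : letter A => S l.1) s -> inF S (elem s).
Proof. exact: all_reduce. Qed.

Lemma inF_mul (S : pred A) u v : inF S u -> inF S v -> inF S (fg_mul u v).
Proof. by move=> Hu Hv; apply: all_reduce; rewrite all_cat; apply/andP. Qed.

Lemma inF_inv (S : pred A) u : inF S u -> inF S (fg_inv u).
Proof. by move=> Hu; apply: all_reduce; rewrite all_rev all_map. Qed.

Lemma inF_one (S : pred A) : inF S (fg_one A).
Proof. by []. Qed.

Lemma inF_gen (S : pred A) a : S a -> inF S (fg_gen a).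
Proof. by rewrite /inF /= => ->. Qed.

Lemma in_comm_inF (S : pred A) u : in_comm S u -> inF S u.
Proof.
elim=> {u} [u v Hu Hv||u v _ Hu _ Hv|u _ Hu].
- by rewrite /fg_comm; apply: inF_mul; apply: inF_mul => //; apply: inF_inv.
- by [].
- exact: inF_mul.
- exact: inF_inv.
Qed.

Definition sgn (l : letter A) : int := if l.2 then (-1)%R else 1%R.
Definition expsum_l a s : int := (\sum_(l <- s | l.1 == a) sgn l)%R.

Lemma expsumE a u : expsum a u = expsum_l a (fgword u).
Proof. by []. Qed.

Lemma expsum_l_cat a s t : expsum_l a (s ++ t) = (expsum_l a s + expsum_l a t)%R.
Proof. by rewrite /expsum_l big_cat. Qed.

Lemma expsum_l_cons a x s :
  expsum_l a (x :: s) = ((if x.1 == a then sgn x else 0) + expsum_l a s)%R.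
Proof. by rewrite /expsum_l big_cons; case: ifP => _; rewrite ?add0r. Qed.

Lemma expsum_l_push a x s : expsum_l a (push x s) = expsum_l a (x :: s).
Proof.
case: s => [|y t] //=; case: eqP => [->|] //.
rewrite !expsum_l_cons /= addrA; case: x => b c /=.
suff -> : ((if b == a then sgn (b, c) else 0) + (if b == a then sgn (b, ~~ c) else 0))%R = 0%R.
  by rewrite add0r.
by case: ifP => _; rewrite ?addr0 // /sgn /=; case: c.
Qed.

Lemma expsum_l_reduce a s : expsum_l a (reduce s) = expsum_l a s.
Proof.
elim: s => // x s IH; rewrite reduce_cons expsum_l_push !expsum_l_cons IH //.
Qed.

Lemma expsum_elem a s : expsum a (elem s) = expsum_l a s.
Proof. exact: expsum_l_reduce. Qed.

Lemma expsum_mul a u v : expsum a (fg_mul u v) = (expsum a u + expsum a v)%R.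
Proof. by rewrite -[fg_mul u v]/(elem _) expsum_elem expsum_l_cat. Qed.

Lemma expsum_inv a u : expsum a (fg_inv u) = (- expsum a u)%R.
Proof.
rewrite inv_elem expsum_elem /expsum_l big_rev big_map expsumE /expsum_l.
rewrite -sumrN; apply: eq_bigr => l _; rewrite /sgn /=.
by case: l.2; rewrite /= ?opprK.
Qed.

Lemma expsum_comm a u v : expsum a (fg_comm u v) = 0%R.
Proof.
rewrite /fg_comm !expsum_mul !expsum_inv.
by rewrite -opprD addNr.
Qed.

Lemma in_comm_expsum (S : pred A) u a : in_comm S u -> expsum a u = 0%R.
Proof.
elim=> {u} [u v _ _||u v _ Hu _ Hv|u _ Hu].
- exact: expsum_comm.
- by rewrite /expsum big_nil.
- by rewrite expsum_mul Hu Hv addr0.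
- by rewrite expsum_inv Hu oppr0.
Qed.


Lemma same_fst x y : y.1 == x.1 -> y != inv_letter x -> y = x.
Proof.
case: x y => a b [a' b'] /= /eqP ->; rewrite /inv_letter /=.
by case: b b' => [] [] //=; rewrite eqxx.
Qed.

Lemma expsum_l_noinv x s :
  inv_letter x \notin s -> expsum_l x.1 s = (sgn x *+ count_mem x s)%R.
Proof.
elim: s => [|y s IH]; first by rewrite /expsum_l big_nil.
rewrite in_cons negb_or => /andP[ne Hs]; rewrite expsum_l_cons IH //=.
case: ifP => [E|E].
  by rewrite (same_fst E) 1?eq_sym // eqxx mulrS.
case: eqP => [Ey|]; last by rewrite add0r.
by move: E; rewrite Ey eqxx.
Qed.

Lemma expsum_nz x s : inv_letter x \notin s -> expsum_l x.1 (x :: s) != 0%R.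
Proof.
move=> H; rewrite expsum_l_cons eqxx expsum_l_noinv // -mulrS.
case: x {H} => a [] /=; rewrite /sgn /=.
  by rewrite mulNrn oppr_eq0 pnatr_eq0.
by rewrite pnatr_eq0.
Qed.

Lemma reduced_const x s :
  reduced (x :: s) -> all (fun l : letter A => l.1 == x.1) s -> all (pred1 x) s.
Proof.
elim: s x => // y s IH x /= /andP[ne Hr] /andP[Ey Hs].
have Exy := same_fst Ey ne; subst y.
by rewrite eqxx /=; apply: IH.
Qed.

Lemma single_one (S : pred A) u :
  (forall a b, S a -> S b -> a = b) -> inF S u ->
  (forall a, expsum a u = 0%R) -> u = fg_one A.
Proof.
case: u => [[|x s] p] HS Hu H0; first exact: fg_eq.
exfalso.
move: Hu; rewrite /inF /= => /andP[Sx Hs].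
have Hc : all (pred1 x) s.
  refine (reduced_const p _).
  apply/allP => l /(allP Hs) Sl; apply/eqP; exact: HS.
have Hn : inv_letter x \notin s.
  apply/negP => /(allP Hc) /=; rewrite /inv_letter; case: (x) => a b /=.
  by rewrite xpair_eqE eqxx /=; case: b.
by have := expsum_nz Hn; rewrite -(H0 x.1) expsumE /= eqxx.
Qed.

Lemma elem1_inv x : fg_inv (elem [:: x]) = elem [:: inv_letter x].
Proof. exact: fg_eq. Qed.

Lemma comm_of_zero (S : pred A) s :
  all (fun l : letter A => S l.1) s -> (forall a, expsum_l a s = 0%R) ->
  in_comm S (elem s).
Proof.
have [m] := ubnP (size s); elim: m s => // m IH [|x s] Hsz Hall H0.
  by rewrite -one_elem; apply: in_comm_one.
have Hin : inv_letter x \in s.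
  by apply/negPn/negP => Hn; have := expsum_nz Hn; rewrite H0 eqxx.
case/splitPr: Hin Hsz Hall H0 => p q Hsz Hall H0.
have -> : elem (x :: p ++ inv_letter x :: q) =
   fg_mul (elem [:: x]) (fg_mul (elem p) (fg_mul (fg_inv (elem [:: x])) (elem q))).
  by rewrite elem1_inv !elem_cat.
set X := elem [:: x]; set P := elem p; set Q := elem q.
have -> : fg_mul X (fg_mul P (fg_mul (fg_inv X) Q)) =
          fg_mul (fg_comm (fg_inv X) (fg_inv P)) (fg_mul P Q).
  by rewrite /fg_comm !fg_invK !fg_mulA -(fg_mulA _ (fg_inv P) P) fg_mulVg fg_mulg1.
move: Hall; rewrite /= all_cat /= => /and3P[Sx Hp /andP[_ Hq]].
apply: in_comm_mul.
  by apply: in_comm_gen; apply: inF_inv; apply: inF_elem => //=; rewrite Sx.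
rewrite /P /Q elem_cat; apply: IH.
- by move: Hsz; rewrite /= size_cat /= size_cat /=; lia.
- by rewrite all_cat Hp Hq.
move=> a; move: (H0 a); rewrite expsum_l_cons !expsum_l_cat expsum_l_cons /=.
suff -> : ((if x.1 == a then sgn x else 0) + (expsum_l a p +
   ((if x.1 == a then sgn (inv_letter x) else 0) + expsum_l a q)))%R =
   (expsum_l a p + expsum_l a q)%R by [].
rewrite addrC -!addrA; congr (_ + _)%R; rewrite addrC -addrA.
suff -> : ((if x.1 == a then sgn x else 0) + (if x.1 == a then sgn (inv_letter x) else 0))%R = 0%R.
  by rewrite addr0.
by case: ifP => _; rewrite ?addr0 //; case: (x) => b [] /=.
Qed.

End FG.

Section Subst.
Variables A B C : eqType.
Implicit Types (f : A -> fg B).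

Definition img f (l : letter A) := if l.2 then fg_inv (f l.1) else f l.1.
Definition subst_l f (s : seq (letter A)) :=
  foldr (fun l acc => fg_mul (img f l) acc) (fg_one B) s.

Lemma substE f u : fg_subst f u = subst_l f (fgword u).
Proof. by []. Qed.

Lemma subst_l_cat f s t : subst_l f (s ++ t) = fg_mul (subst_l f s) (subst_l f t).
Proof. by elim: s => [|x s IH] /=; rewrite ?fg_mul1g // IH fg_mulA. Qed.

Lemma img_inv f x : fg_mul (img f x) (img f (inv_letter x)) = fg_one B.
Proof. by case: x => a [] /=; rewrite /img /= ?fg_mulVg ?fg_mulgV. Qed.

Lemma subst_l_push f x s : subst_l f (push x s) = subst_l f (x :: s).
Proof.
case: s => [|y t] //=; case: eqP => [->|] //=.
by rewrite fg_mulA img_inv fg_mul1g.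
Qed.

Lemma subst_l_reduce f s : subst_l f (reduce s) = subst_l f s.
Proof. by elim: s => // x s IH; rewrite reduce_cons subst_l_push /= IH. Qed.

Lemma subst_elem f s : fg_subst f (elem s) = subst_l f s.
Proof. exact: subst_l_reduce. Qed.

Lemma subst_mul f u v : fg_subst f (fg_mul u v) = fg_mul (fg_subst f u) (fg_subst f v).
Proof. by rewrite -[fg_mul u v]/(elem _) subst_elem subst_l_cat. Qed.

Lemma subst_one f : fg_subst f (fg_one A) = fg_one B.
Proof. by []. Qed.

Lemma subst_inv f u : fg_subst f (fg_inv u) = fg_inv (fg_subst f u).
Proof. by apply: inv_uniq_r; rewrite -subst_mul fg_mulgV. Qed.

Lemma subst_gen f a : fg_subst f (fg_gen a) = f a.
Proof. by rewrite substE /= fg_mulg1. Qed.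

Lemma subst_comm f u v :
  fg_subst f (fg_comm u v) = fg_comm (fg_subst f u) (fg_subst f v).
Proof. by rewrite /fg_comm !subst_mul !subst_inv. Qed.

Lemma subst_ext f f' u :
  (forall l, l \in fgword u -> f l.1 = f' l.1) -> fg_subst f u = fg_subst f' u.
Proof.
rewrite !substE; elim: (fgword u) => // x s IH H /=.
rewrite IH; last by move=> l Hl; apply: H; rewrite in_cons Hl orbT.
by rewrite /img H // mem_head.
Qed.

Lemma subst_ext_all f f' u : (forall a, f a = f' a) -> fg_subst f u = fg_subst f' u.
Proof. by move=> H; apply: subst_ext. Qed.

Lemma inF_subst (S' : pred B) f u :
  (forall l, l \in fgword u -> inF S' (f l.1)) -> inF S' (fg_subst f u).
Proof.
rewrite substE; elim: (fgword u) => // x s IH H /=.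
apply: inF_mul; last by apply: IH => l Hl; apply: H; rewrite in_cons Hl orbT.
rewrite /img; case: ifP => _; last by apply: H; rewrite mem_head.
by apply: inF_inv; apply: H; rewrite mem_head.
Qed.

Lemma in_comm_subst (S : pred A) (S' : pred B) f u :
  (forall a, S a -> inF S' (f a)) -> in_comm S u -> in_comm S' (fg_subst f u).
Proof.
move=> Hf; elim=> {u} [u v Hu Hv||u v _ Hu _ Hv|u _ Hu].
- rewrite subst_comm; apply: in_comm_gen; apply: inF_subst => l Hl; apply: Hf.
    exact: (allP Hu).
  exact: (allP Hv).
- exact: in_comm_one.
- by rewrite subst_mul; apply: in_comm_mul.
- by rewrite subst_inv; apply: in_comm_inv.
Qed.

Lemma expsum_gen (a b : A) : expsum a (fg_gen b) = (if b == a then 1 else 0)%R.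
Proof. by rewrite expsumE /expsum_l big_cons big_nil /= addr0. Qed.

End Subst.

Lemma subst_comp (A B C : eqType) (f : A -> fg B) (g : B -> fg C) (u : fg A) :
  fg_subst g (fg_subst f u) = fg_subst (fun a => fg_subst g (f a)) u.
Proof.
rewrite (substE f u) (substE (fun a => fg_subst g (f a)) u); elim: (fgword u) => // x s IH /=.
by rewrite subst_mul IH /img; case: ifP => _; rewrite ?subst_inv.
Qed.


Lemma expsum_subst_inv (A : eqType) (a : A) (u : fg A) :
  expsum a (fg_subst (fun j => fg_inv (fg_gen j)) u) = (- expsum a u)%R.
Proof.
rewrite substE [expsum a u]expsumE; elim: (fgword u) => [|x s IH].
  by rewrite /= /expsum_l /expsum /= !big_nil oppr0.
rewrite /= expsum_mul IH expsum_l_cons opprD; congr (_ + _)%R.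
rewrite /img /sgn; case: x => b [] /=; rewrite ?fg_invK ?expsum_inv expsum_gen;
  by case: ifP; rewrite ?opprK ?oppr0.
Qed.

Section Gen.
Variable A : eqType.
Lemma subst_gen_id (u : fg A) : fg_subst (@fg_gen A) u = u.
Proof.
rewrite -{2}(elemK u) substE; elim: (fgword u) => [|x s IH] /=; first exact: fg_eq.
rewrite IH -cat1s -elem_cat; congr fg_mul.
by case: x => a [] /=; rewrite /img /=; apply: fg_eq.
Qed.

Variable I : Type.
Implicit Types (h : I -> fg A).
Definition fgprod h (x : fg A) (s : seq I) := foldl (fun acc i => fg_mul acc (h i)) x s.

Lemma fgprod_cons h x i s : fgprod h x (i :: s) = fgprod h (fg_mul x (h i)) s.
Proof. by []. Qed.

Lemma fgprodE h x s : fgprod h x s = fg_mul x (fgprod h (fg_one A) s).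
Proof.
elim: s x => [|i s IH] x; first by rewrite /fgprod /= fg_mulg1.
by rewrite !fgprod_cons IH [in RHS]IH fg_mul1g fg_mulA.
Qed.

Lemma fgprod_ext h h' x s : (forall i, h i = h' i) -> fgprod h x s = fgprod h' x s.
Proof. by move=> H; elim: s x => // i s IH x; rewrite !fgprod_cons H IH. Qed.

Lemma expsum_fgprod a h x s :
  expsum a (fgprod h x s) = (expsum a x + \sum_(i <- s) expsum a (h i))%R.
Proof.
elim: s x => [|i s IH] x; first by rewrite big_nil addr0.
by rewrite fgprod_cons IH expsum_mul big_cons addrA.
Qed.
End Gen.

Lemma fgprod_subst (A B : eqType) (I : Type) (f : A -> fg B) (h : I -> fg A) x s :
  fg_subst f (fgprod h x s) = fgprod (fun i => fg_subst f (h i)) (fg_subst f x) s.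
Proof. by elim: s x => // i s IH x; rewrite fgprod_cons IH subst_mul. Qed.


Lemma fgprod_single (A I : eqType) (h : I -> fg A) (s : seq I) i :
  uniq s -> (forall k, k != i -> h k = fg_one A) ->
  fgprod h (fg_one A) s = if i \in s then h i else fg_one A.
Proof.
move=> Hu H; elim: s Hu => // k s IH; rewrite cons_uniq => /andP[Hk Hs].
rewrite fgprod_cons fgprodE IH // fg_mul1g in_cons.
case: (eqVneq k i) Hk => [->|ne] Hk /=.
  by rewrite (negbTE Hk) fg_mulg1.
by rewrite H // fg_mul1g.
Qed.

Lemma subst_const_one (A B : eqType) (u : fg A) : fg_subst (fun _ => fg_one B) u = fg_one B.
Proof.
rewrite substE; elim: (fgword u) => // x s IH /=.
by rewrite IH /img; case: ifP => _; rewrite ?fg_inv1 fg_mul1g.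
Qed.

Section Main.
Variables (n' r : nat) (hr : r <= n').
Local Notation n := n'.+1.
Local Notation X := (Xlet n r).

Definition dl (j : 'I_r) : X := (widen_ord hr j, j).
Definition g0 (j : 'I_r) : fg X := fg_inv (fg_gen (dl j)).
Definition wid (i : 'I_n') : 'I_n := widen_ord (leq_pred n) i.

Lemma phi_last (w : fg X) : phi w ord_max = fg_subst (fun x : X => fg_inv (fg_gen x.2)) w.
Proof. by apply: subst_ext_all => x /=; rewrite eqxx. Qed.

Lemma phi_wid (w : fg X) i :
  phi w (wid i) = fg_subst (fun x : X => if val x.1 == val i then fg_gen x.2 else fg_one _) w.
Proof. by apply: subst_ext_all => x /=; rewrite (ltn_eqF (ltn_ord i)). Qed.

Lemma phi_comm_wid (wD : fg X) i : in_comm (@inDelta n r) wD -> phi wD (wid i) = fg_one _.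
Proof.
move=> H; rewrite phi_wid.
set S' := fun j : 'I_r => val j == val i.
set f := fun x : X => if val x.1 == val i then fg_gen x.2 else fg_one _.
have Hf : forall x, inDelta x -> inF S' (f x).
  move=> x; rewrite /inDelta /f => /eqP Hx; case: ifP => [/eqP E|_]; last exact: inF_one.
  by apply: inF_gen; rewrite /S' -Hx E.
have H' := in_comm_subst Hf H.
apply: (single_one (S := S')).
- by move=> a b /eqP Ha /eqP Hb; apply: val_inj; rewrite Ha Hb.
- exact: in_comm_inF H'.
- by move=> a; apply: in_comm_expsum H'.
Qed.

Lemma phi_other (u : fg X) (k i : 'I_n') :
  inF (@inXalpha n r k) u -> k != i -> phi u (wid i) = fg_one _.
Proof.
move=> Hu ne; rewrite phi_wid.
rewrite -[RHS](@subst_const_one X _ u); apply: subst_ext => l Hl.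
have /eqP -> := allP Hu l Hl.
case: eqP => [E|_]; last by [].
by move: ne; rewrite (val_inj E) eqxx.
Qed.

Lemma phi_same (u : fg X) (i : 'I_n') :
  inF (@inXalpha n r i) u -> phi u (wid i) = eval_alpha u.
Proof.
move=> Hu; rewrite phi_wid; apply: subst_ext => l Hl.
by have /eqP -> := allP Hu l Hl; rewrite eqxx.
Qed.

Lemma eval_alphaK (u : fg X) (i : 'I_n') :
  inF (@inXalpha n r i) u -> fg_subst (fun j => fg_gen ((i, j) : X)) (eval_alpha u) = u.
Proof.
move=> Hu; rewrite /eval_alpha subst_comp -[RHS]subst_gen_id; apply: subst_ext => l Hl.
rewrite subst_gen; have /eqP := allP Hu l Hl; rewrite /= => <-.
by case: l {Hl} => [[a b] c].
Qed.

Lemma deltaK (u : fg X) : inF (@inDelta n r) u ->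
  fg_subst g0 (fg_subst (fun x : X => fg_inv (fg_gen x.2)) u) = u.
Proof.
move=> Hu; rewrite subst_comp -[RHS]subst_gen_id; apply: subst_ext => l Hl.
rewrite subst_inv subst_gen /g0 fg_invK; congr fg_gen.
have /eqP := allP Hu l Hl; case: l {Hl} => [[a b] c] /= E.
by rewrite /dl; congr (_, _); apply: val_inj; rewrite /= E.
Qed.

Lemma deltaK' (t : fg 'I_r) :
  fg_subst (fun x : X => fg_inv (fg_gen x.2)) (fg_subst g0 t) = t.
Proof.
rewrite subst_comp -[RHS]subst_gen_id; apply: subst_ext_all => j.
by rewrite /g0 subst_inv subst_gen fg_invK.
Qed.

Lemma g0_delta (t : fg 'I_r) : in_comm predT t -> in_comm (@inDelta n r) (fg_subst g0 t).
Proof.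
apply: in_comm_subst => a _; apply: inF_inv; apply: inF_gen.
by rewrite /inDelta /dl /=.
Qed.

End Main.
Theorem lemma3p6 (n r : nat) (hnr : r.+2 <= n) (g : 'I_n -> fg 'I_r) :
  inK g ->
  [/\ exists w, represents w g /\ exists wD ws, decomp w wD ws,
      forall w w' : fg (Xlet n r),
        represents w g -> (exists wD ws, decomp w wD ws) ->
        represents w' g -> (exists wD ws, decomp w' wD ws) -> w = w'
    & forall (w wD : fg (Xlet n r)) (ws : 'I_n.-1 -> fg (Xlet n r)),
        represents w g -> decomp w wD ws ->
        forall i : 'I_n.-1, eval_alpha (ws i) = g (widen_ord (leq_pred n) i)].
Proof.
case: n hnr g => [|n'] // hnr g HK.
have hr : r <= n' by lia.
have Hprod : forall (w wD : fg (Xlet n'.+1 r)) ws alpha, decomp w wD ws ->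
    phi w alpha = fgprod (fun k => phi (ws k) alpha) (phi wD alpha) (enum 'I_n').
  by move=> w wD ws alpha [_ _ ->]; exact: fgprod_subst.
have P3 : forall (w wD : fg (Xlet n'.+1 r)) ws, represents w g -> decomp w wD ws ->
    forall i : 'I_n', eval_alpha (ws i) = g (wid i).
  move=> w wD ws Hrep Hd i; have [HD Hws _] := Hd.
  rewrite -(Hrep (wid i)) (Hprod _ _ _ _ Hd) (phi_comm_wid i HD) fgprodE fg_mul1g.
  rewrite (@fgprod_single _ _ _ (enum 'I_n') i (enum_uniq _)); last first.
    by move=> k ne; apply: phi_other (Hws k) ne.
  by rewrite mem_enum phi_same.
split => //.
- pose ws := fun i : 'I_n' => fg_subst (fun j => fg_gen ((i, j) : Xlet n'.+1 r)) (g (wid i)).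
  have Hws : forall i, inF (@inXalpha n'.+1 r i) (ws i).
    by move=> i; apply: inF_subst => l _; apply: inF_gen; rewrite /inXalpha /= eqxx.
  have Hlast : forall k, phi (ws k) ord_max = fg_subst (fun j => fg_inv (fg_gen j)) (g (wid k)).
    move=> k; rewrite phi_last subst_comp; apply: subst_ext_all => j.
    by rewrite subst_gen.
  pose Pi := fgprod (fun k => phi (ws k) ord_max) (fg_one _) (enum 'I_n').
  pose t := fg_mul (g ord_max) (fg_inv Pi).
  have Ht : in_comm predT t.
    rewrite -(elemK t); apply: comm_of_zero; first by apply/allP.
    move=> a; rewrite -expsumE /t expsum_mul expsum_inv /Pi expsum_fgprod.
    under eq_bigr do rewrite Hlast expsum_subst_inv.
    have E := HK a; rewrite big_ord_recr /= in E.
    rewrite sumrN big_enum /=.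
    have -> : expsum a (fg_one 'I_r) = 0%R by rewrite /expsum big_nil.
    rewrite sub0r opprK addrC -[in RHS]E; congr (_ + _)%R.
    apply: eq_big => // i _; congr (expsum a (g _)); exact: val_inj.
  pose wD := fg_subst (g0 hr) t.
  have Hd : decomp (fgprod ws wD (enum 'I_n')) wD ws by split => //; exact: g0_delta.
  exists (fgprod ws wD (enum 'I_n')); split; last by exists wD, ws.
  move=> alpha; rewrite (Hprod _ _ _ _ Hd).
  case: (eqVneq alpha ord_max) => [->|ne].
    rewrite fgprodE -/Pi /wD phi_last deltaK' /t.
    by rewrite -fg_mulA fg_mulVg fg_mulg1.
  have Ha : val alpha < n'.
    have := ltn_ord alpha; rewrite ltnS leq_eqVlt => /orP[/eqP E|//].
    have E' : alpha = ord_max by apply: val_inj.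
    by rewrite E' eqxx in ne.
  have -> : alpha = wid (Ordinal Ha) by apply: val_inj.
  set i := Ordinal Ha.
  rewrite (phi_comm_wid i (g0_delta hr Ht)) fgprodE fg_mul1g.
  rewrite (@fgprod_single _ _ _ (enum 'I_n') i (enum_uniq _)); last first.
    by move=> k ne'; apply: phi_other (Hws k) ne'.
  rewrite mem_enum (phi_same (Hws i)) /eval_alpha subst_comp -[RHS]subst_gen_id.
  by apply: subst_ext_all => j; rewrite subst_gen.
- move=> w w' Hrep [wD [ws Hd]] Hrep' [wD' [ws' Hd']].
  have Ews : forall i, ws i = ws' i.
    move=> i; have [_ Hws _] := Hd; have [_ Hws' _] := Hd'.
    by rewrite -(eval_alphaK (Hws i)) -(eval_alphaK (Hws' i)) (P3 _ _ _ Hrep Hd) (P3 _ _ _ Hrep' Hd').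
  have EwD : wD = wD'.
    have [HD _ _] := Hd; have [HD' _ _] := Hd'.
    rewrite -(deltaK hr (in_comm_inF HD)) -(deltaK hr (in_comm_inF HD')) -!phi_last.
    have := Hrep ord_max; rewrite -(Hrep' ord_max) (Hprod _ _ _ _ Hd) (Hprod _ _ _ _ Hd').
    rewrite fgprodE [in RHS]fgprodE (fgprod_ext _ _ (fun k => congr1 (fun u => phi u ord_max) (Ews k))).
    by move/fg_mulgI => ->.
  case: Hd Hd' => _ _ -> [_ _ ->]; rewrite EwD.
  exact: (fgprod_ext _ _ Ews).
Qed.
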